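(* There is $C=C(\delta)<\infty$ such that the following holds in the setting described in the context: for any $i\in[k]$ there exists a set $V_i'\subseteq V_i$ with $|V_i'|\ge\delta^4n/80$ such that for every $v\in V_i'$, the random walk on $G^\rho$ started at $v$ satisfies \[ \Pr_v(\tau_\rho<\tau_{V\setminus V_i})\ge 1-C\varepsilon^2 . \]
   Context: Setting: $\delta\in(0,1]$, $\varepsilon>0$, $G=(V,E)$ is a connected simple graph on $n$ vertices with minimal degree at least $\delta n$, and $V=V_1\sqcup\dots\sqcup V_k$ is an $(\varepsilon,\delta,n^{1.5})$-good decomposition with parameter $\theta$; moreover $\sqrt n>1/(\theta\varepsilon^8)$. Here, writing $\deg(v,U)$ for the number of edges from $v$ to $U$ and $E(A,B)$ for edges between $A,B$, an $(\varepsilon,\delta,\beta)$-good decomposition with parameter $\theta\in[\varepsilon^{11\cdot2^{2/\delta}},\varepsilon]$ means: $k\le2/\delta$; $|V_i|\ge\delta n/2$; the spectral gap ($1-\lambda_2$ of the simple random walk transition matrix) of the induced graph $G[V_i]$ is at least $\frac{\delta^{15}\theta\beta}{2^{31}n^2}$; $\deg(v,V_i)\ge\delta^4n/40$ for $v\in V_i$; $|E(V_i,V\setminus V_i)|\le\varepsilon^9\theta^2\beta$, for all $i$. $G^\rho$ is the network obtained from $G$ (edges of weight 1) by adding a vertex $\rho$ joined to every $v\in V$ by an edge of weight $w(v,\rho)=\frac{\theta\varepsilon^4\deg_G(v)}{\sqrt n-\theta\varepsilon^4}$; the random walk moves along edges with probability proportional to their weights. For a set $A$, $\tau_A$ is the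 hitting time of $A$, and $\tau_\rho=\tau_{\{\rho\}}$. *)

(* Defs.v *)
From HB Require Import structures.
From mathcomp Require Import all_boot all_order all_algebra.
From mathcomp Require Import all_classical all_reals all_analysis.
From mathcomp Require Import Rstruct Rstruct_topology.
Set Implicit Arguments. Unset Strict Implicit. Unset Printing Implicit Defensive.
From Stdlib Require Rdefinitions.
Notation R := Rdefinitions.R.
Import Order.TTheory GRing.Theory Num.Theory.
Local Open Scope ring_scope.

Section GraphDefs.
Variables (V : finType) (e : rel V).

Definition simple_graph : Prop := symmetric e /\ irreflexive e.
Definition connected_graph : Prop := forall x y : V, connect e x y.

Definition degU (v : V) (U : {set V}) : nat := #|[set u in U | e v u]|.
Definition deg (v : V) : nat := #|[set u | e v u]|.
Definition cut_size (A : {set V}) : nat :=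
  #|[set p : V * V | [&& p.1 \in A, p.2 \notin A & e p.1 p.2]]|.

Definition srw_induced (A : {set V}) : 'M[R]_#|A| :=
  \matrix_(i, j) ((e (enum_val i) (enum_val j))%:R / (degU (enum_val i) A)%:R).
End GraphDefs.

(* "the spectral gap 1 - lambda_2 of P is at least g":
   with s the list of eigenvalues of P counted with multiplicity (the roots of
   the characteristic polynomial), at most one eigenvalue exceeds 1 - g,
   i.e. lambda_2 <= 1 - g. *)
Definition spectral_gap_ge (m : nat) (P : 'M[R]_m) (g : R) : Prop :=
  exists s : seq R, char_poly P = \prod_(r <- s) ('X - r%:P) /\
                    (count (fun r : R => (1 - g < r)%R) s <= 1)%N.

Definition good_decomposition (V : finType) (e : rel V) (k : nat) (part : V -> 'I_k)
    (eps delta beta theta : R) : Prop :=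
  let n := #|V| in
  [/\ eps `^ (11 * 2 `^ (2 / delta)) <= theta /\ theta <= eps,
      k%:R <= 2 / delta &
      forall i : 'I_k, let Vi := [set v | part v == i] in
      [/\ delta * n%:R / 2 <= (#|Vi|)%:R,
          spectral_gap_ge (srw_induced e Vi)
             (delta ^+ 15 * theta * beta / (2 ^+ 31 * n%:R ^+ 2)),
          forall v, v \in Vi -> delta ^+ 4 * n%:R / 40 <= (degU e v Vi)%:R &
          (cut_size e Vi)%:R <= eps ^+ 9 * theta ^+ 2 * beta]].

(* The network G^rho on state space option V (None = rho). *)
Section Network.
Variables (V : finType) (e : rel V) (theta eps : R).
Definition rho_weight (v : V) : R :=
  theta * eps ^+ 4 * (deg e v)%:R / (Num.sqrt (#|V|%:R) - theta * eps ^+ 4).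
Definition Grho_weight (x y : option V) : R :=
  match x, y with
  | Some u, Some v => (e u v)%:R
  | Some u, None => rho_weight u
  | None, Some v => rho_weight v
  | None, None => 0
  end.
Definition Grho_trans (x y : option V) : R :=
  Grho_weight x y / \sum_(z : option V) Grho_weight x z.
End Network.

(* Hitting probabilities of a Markov chain with transition kernel Q on a finite
   state space S, started at v, where hitting times count from time 0. *)
Section Hitting.
Variables (S : finType) (Q : S -> S -> R).

Definition path_prob (t : nat) (x : {ffun 'I_t.+1 -> S}) : R :=
  \prod_(j < t) Q (x (widen_ord (leqnSn t) j)) (x (lift ord0 j)).

(* Pr_v(tau_a = t and X_s \notin B for all s < t) *)
Definition hit_at (a : S) (B : {set S}) (v : S) (t : nat) : R :=
  \sum_(x : {ffun 'I_t.+1 -> S} |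
          [&& x ord0 == v, x ord_max == a &
              [forall j : 'I_t.+1, (j < t)%N ==> (x j \notin B) && (x j != a)]])
    path_prob x.

Definition hit_before (a : S) (B : {set S}) (v : S) : R :=
  limn (series (hit_at a B v)).
End Hitting.

(* Main.v *)
Require Import Defs.
From HB Require Import structures.
From mathcomp Require Import all_boot all_order all_algebra.
From mathcomp Require Import all_classical all_reals all_analysis.
From mathcomp Require Import Rstruct Rstruct_topology.
From mathcomp Require Import ring lra.
Import Order.TTheory GRing.Theory Num.Theory.
Set Implicit Arguments. Unset Strict Implicit. Unset Printing Implicit Defensive.
Local Open Scope ring_scope.

Section FirstStep.
Variables (S : finType) (Q : S -> S -> R) (a : S) (B : {set S}).

Definition fcons n (s : S) (y : {ffun 'I_n -> S}) : {ffun 'I_n.+1 -> S} :=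
  [ffun j => if unlift ord0 j is Some k then y k else s].
Definition ftl n (x : {ffun 'I_n.+1 -> S}) : {ffun 'I_n -> S} :=
  [ffun k => x (lift ord0 k)].

Lemma fcons0 n s (y : {ffun 'I_n -> S}) : fcons s y ord0 = s.
Proof. by rewrite /fcons ffunE unlift_none. Qed.
Lemma fconsS n s (y : {ffun 'I_n -> S}) k : fcons s y (lift ord0 k) = y k.
Proof. by rewrite /fcons ffunE liftK. Qed.
Lemma ftlK n s (y : {ffun 'I_n -> S}) : ftl (fcons s y) = y.
Proof. by apply/ffunP => k; rewrite ffunE fconsS. Qed.
Lemma fconsK n (x : {ffun 'I_n.+1 -> S}) : fcons (x ord0) (ftl x) = x.
Proof.
apply/ffunP => j; rewrite /fcons ffunE.
by case: unliftP => [k -> | ->]; rewrite ?ffunE.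
Qed.

Lemma hit_atS v t :
  hit_at Q a B v t.+1 =
  if (v \notin B) && (v != a) then \sum_y Q v y * hit_at Q a B y t else 0.
Proof.
rewrite /hit_at.
rewrite (reindex_onto (@fcons t.+1 v) (@ftl t.+1)); last first.
  by move=> x /andP[/eqP <- _]; rewrite fconsK.
have Emax : (ord_max : 'I_t.+2) = lift ord0 (ord_max : 'I_t.+1).
  by apply: val_inj.
have Eall : forall y : {ffun 'I_t.+1 -> S},
   [forall j : 'I_t.+2, (j < t.+1)%N ==> (fcons v y j \notin B) && (fcons v y j != a)]
   = ((v \notin B) && (v != a)) &&
     [forall k : 'I_t.+1, (k < t)%N ==> (y k \notin B) && (y k != a)].
  move=> y; apply/idP/idP.
    move/forallP => H; apply/andP; split.
      by have := H ord0; rewrite fcons0.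
    apply/forallP => k; have := H (lift ord0 k).
    by rewrite fconsS /= /bump /= add1n ltnS.
  case/andP => Hv /forallP H; apply/forallP => j.
  case: (unliftP ord0 j) => [k -> | ->]; last by rewrite fcons0 Hv implybT.
  by rewrite fconsS /= /bump /= add1n ltnS; apply: H.
have Eprod : forall y : {ffun 'I_t.+1 -> S},
   path_prob Q (fcons v y) = Q v (y ord0) * path_prob Q y.
  move=> y; rewrite /path_prob big_ord_recl.
  have -> : widen_ord (leqnSn t.+1) ord0 = ord0 by apply: val_inj.
  rewrite fcons0 fconsS; congr (_ * _).
  apply: eq_bigr => j _.
  have -> : widen_ord (leqnSn t.+1) (lift ord0 j) = lift ord0 (widen_ord (leqnSn t) j).
    by apply: val_inj.
  by rewrite !fconsS.
under eq_bigl => y do rewrite fcons0 eqxx ftlK eqxx Emax fconsS Eall /= andbT.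
under eq_bigr => y _ do rewrite Eprod.
case: ifP => Hv; last by rewrite big_pred0 // => y; rewrite andbF.
rewrite (partition_big (fun y : {ffun 'I_t.+1 -> S} => y ord0) xpredT) //.
apply: eq_bigr => u _; rewrite big_distrr /=.
apply: eq_big => y.
  by rewrite andbC.
by move=> /andP[_ /eqP ->].
Qed.

Lemma hit_at0 v : hit_at Q a B v 0 = (v == a)%:R.
Proof.
rewrite /hit_at.
have E : forall x : {ffun 'I_1 -> S},
  [&& x ord0 == v, x ord_max == a &
      [forall j : 'I_1, (j < 0)%N ==> (x j \notin B) && (x j != a)]]
  = (v == a) && (x == [ffun => a]).
  move=> x; have -> : (ord_max : 'I_1) = ord0 by apply: val_inj.
  have -> : [forall j : 'I_1, (j < 0)%N ==> (x j \notin B) && (x j != a)] by apply/forallP.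
  apply/idP/idP.
    case/andP => /eqP <- /andP[/eqP Ha _]; rewrite Ha eqxx /=.
    apply/eqP/ffunP => j; rewrite ffunE; have -> : j = ord0 by apply: val_inj; case: j => [[]].
    by [].
  case/andP => /eqP -> /eqP ->; by rewrite !ffunE eqxx.
under eq_bigl => x do rewrite E.
case: eqP => _ /=; last by rewrite big_pred0.
by rewrite (big_pred1 [ffun => a]) // /path_prob big_ord0.
Qed.

End FirstStep.
Section Abstract.
Variables (V : finType) (E : V -> V -> R) (A : {set V}) (p : R).
Hypothesis E_ge0 : forall u w, 0 <= E u w.
Hypothesis E_sym : forall u w, E u w = E w u.
Definition dd u := \sum_w E u w.
Hypothesis d_gt0 : forall u, 0 < dd u.
Hypothesis p_gt0 : 0 < p.
Hypothesis p_le1 : p <= 1.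

Fixpoint hh (T : nat) (u : V) : R :=
  match T with
  | 0 => 0
  | T'.+1 => if u \in A then p + \sum_w ((1 - p) * E u w / dd u) * hh T' w else 0
  end.

Lemma hh_out T u : u \notin A -> hh T u = 0.
Proof. by case: T => //= T /negbTE ->. Qed.

Lemma hh_bounds T u : 0 <= hh T u <= 1.
Proof.
elim: T u => [|T IH] u /=; first by rewrite lexx ler01.
case: ifP => _; last by rewrite lexx ler01.
have q0 : 0 <= 1 - p by rewrite subr_ge0.
have Hw : forall w, 0 <= (1 - p) * E u w / dd u.
  by move=> w; apply: divr_ge0; [apply: mulr_ge0 | apply: ltW].
apply/andP; split.
  apply: addr_ge0; first exact: ltW.
  by apply: sumr_ge0 => w _; apply: mulr_ge0 => //; case/andP: (IH w).
have : \sum_w ((1 - p) * E u w / dd u) * hh T w <= \sum_w ((1 - p) * E u w / dd u).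
  by apply: ler_sum => w _; apply: ler_piMr => //; case/andP: (IH w).
have -> : \sum_w ((1 - p) * E u w / dd u) = 1 - p.
  rewrite -mulr_suml -mulr_sumr /dd -/(dd u) mulfK //; exact: lt0r_neq0 (d_gt0 u).
move=> H; have := lerD (lexx p) H; lra.
Qed.

Definition cutR := \sum_(u in A) \sum_(w | w \notin A) E u w.
Definition FF T := \sum_(u in A) dd u * (1 - hh T u).

Lemma FF_step T : FF T.+1 <= (1 - p) * (FF T + cutR).
Proof.
rewrite /FF /=.
have E1 : forall u, u \in A ->
   dd u * (1 - (p + \sum_w ((1 - p) * E u w / dd u) * hh T w))
   = (1 - p) * \sum_w E u w * (1 - hh T w).
  move=> u _.
  have dn : dd u != 0 by exact: lt0r_neq0 (d_gt0 u).
  have H1 : \sum_w ((1 - p) * E u w / dd u) * hh T w = (1 - p) / dd u * \sum_w E u w * hh T w.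
    by rewrite mulr_sumr; apply: eq_bigr => w _; ring.
  have H2 : \sum_w E u w * (1 - hh T w) = dd u - \sum_w E u w * hh T w.
    by rewrite /dd -sumrB; apply: eq_bigr => w _; ring.
  by rewrite H1 H2; field.
have q0 : 0 <= 1 - p by rewrite subr_ge0.
rewrite (eq_bigr (fun u => (1 - p) * \sum_w E u w * (1 - hh T w))); last first.
  by move=> u Hu; rewrite Hu E1.
rewrite -mulr_sumr ler_wpM2l //.
have E2 : forall u, \sum_w E u w * (1 - hh T w) =
   \sum_(w in A) E u w * (1 - hh T w) + \sum_(w | w \notin A) E u w.
  move=> u; rewrite (bigID (fun w => w \in A)) /=; congr (_ + _).
  by apply: eq_bigr => w Hw; rewrite hh_out // subr0 mulr1.

rewrite (eq_bigr _ (fun u _ => E2 u)).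
rewrite big_split /= lerD2r /FF exchange_big /=.
apply: ler_sum => w Hw; rewrite -mulr_suml; apply: ler_wpM2r.
  by rewrite subr_ge0; case/andP: (hh_bounds T w).
rewrite /dd [X in _ <= X](eq_bigr (fun u => E u w)); last by move=> u _; rewrite E_sym.
rewrite [X in _ <= X](bigID (fun u => u \in A)) /= lerDl.
by apply: sumr_ge0 => u _; apply: E_ge0.
Qed.

Lemma FF_bound T : FF T <= (1 - p) ^+ T * FF 0 + cutR * (1 - p) / p.
Proof.
have q0 : 0 <= 1 - p by rewrite subr_ge0.
have c0 : 0 <= cutR by apply: sumr_ge0 => u _; apply: sumr_ge0 => w _; apply: E_ge0.
have pn : p != 0 by exact: lt0r_neq0.
elim: T => [|T IH].
  rewrite expr0 mul1r lerDl; apply: divr_ge0; [exact: mulr_ge0 | exact: ltW].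
apply: (le_trans (FF_step T)).
have := ler_wpM2l q0 (lerD IH (lexx cutR)).
move/le_trans; apply.
rewrite [X in X <= _](_ : _ = (1 - p) ^+ T.+1 * FF 0 + cutR * (1 - p) / p) //.
by rewrite exprS; field.
Qed.
End Abstract.

Lemma sum_option (T : finType) (F : option T -> R) :
  \sum_z F z = F None + \sum_v F (Some v).
Proof.
rewrite [LHS](bigD1 None) //=; congr (_ + _).
case: (pickP T) => [v0 _ | T0].
  rewrite (reindex_onto (fun v : T => Some v) (fun z => odflt v0 z)) /=.
    by apply: eq_bigl => v; rewrite eqxx.
  by case.
rewrite [RHS]big_pred0 //.
by rewrite big_pred0 //; case => // v; have := T0 v.
Qed.

Section Concrete.
Variables (V : finType) (e : rel V) (k : nat) (part : V -> 'I_k) (i : 'I_k).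
Variables (theta eps : R).
Let N := theta * eps ^+ 4.
Let s := Num.sqrt (#|V|%:R : R).
Hypothesis N_ge0 : 0 <= N.
Hypothesis sN : N < s.
Hypothesis deg_gt0 : forall u, (0 < deg e u)%N.

Let Q := Grho_trans e theta eps.
Let Bset := [set x : option V | if x is Some u then part u != i else false].
Let A := [set v | part v == i].
Let E := fun u w : V => ((e u w)%:R : R).
Let p := N / s.

Lemma sumE u : \sum_w E u w = (deg e u)%:R.
Proof.
rewrite /E -natr_sum /deg -sum1_card; congr (_%:R).
by rewrite [RHS]big_mkcond /=; apply: eq_bigr => w _; rewrite inE; case: (e u w).
Qed.

Lemma Qnone u : Q (Some u) None = p.
Proof.
rewrite /Q /Grho_trans sum_option /= sumE /rho_weight -/N -/s /p.
have D0 : (deg e u)%:R != 0 :> R by rewrite pnatr_eq0 -lt0n deg_gt0.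
have x0 : s - N != 0 by rewrite subr_eq0 gt_eqF.
have s0 : s != 0 by rewrite gt_eqF // (le_lt_trans N_ge0 sN).
have DS : N * (deg e u)%:R + (deg e u)%:R * (s - N) = (deg e u)%:R * s by ring.
by field; rewrite s0 x0 DS mulf_neq0.
Qed.

Lemma Qsome u w : Q (Some u) (Some w) = (1 - p) * E u w / (\sum_w E u w).
Proof.
rewrite /Q /Grho_trans sum_option /= sumE /rho_weight -/N -/s /p /E.
have D0 : (deg e u)%:R != 0 :> R by rewrite pnatr_eq0 -lt0n deg_gt0.
have x0 : s - N != 0 by rewrite subr_eq0 gt_eqF.
have s0 : s != 0 by rewrite gt_eqF // (le_lt_trans N_ge0 sN).
have DS : N * (deg e u)%:R + (deg e u)%:R * (s - N) = (deg e u)%:R * s by ring.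
by field; rewrite ?s0 ?x0 ?D0 ?DS ?mulf_neq0.
Qed.


Lemma link T u : \sum_(t < T.+1) hit_at Q None Bset (Some u) t = hh E A p T u.
Proof.
have SN : (Some u == None) = false by [].
elim: T u {SN} => [|T IH] u.
  by rewrite big_ord1 hit_at0.
rewrite big_ord_recl hit_at0 add0r.
under eq_bigr => t _ do rewrite lift0 hit_atS.
rewrite !inE negbK andbT /= /A inE.
case Hu: (part u == i); last by rewrite big1.
under eq_bigr => t _ do rewrite sum_option.
rewrite big_split /= -mulr_sumr exchange_big /=.
have -> : \sum_(t < T.+1) hit_at Q None Bset None t = 1.
  rewrite big_ord_recl hit_at0 eqxx big1 ?addr0 // => t _.
  by rewrite lift0 hit_atS eqxx andbF.
rewrite mulr1 Qnone; congr (_ + _); apply: eq_bigr => w _.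
by rewrite -mulr_sumr IH Qsome.
Qed.

Hypothesis e_sym : symmetric e.
Hypothesis N_gt0 : 0 < N.

Lemma Q_ge0 x y : 0 <= Q x y.
Proof.
have x0 : 0 < s - N by rewrite subr_gt0.
have W0 : forall x y, 0 <= Grho_weight e theta eps x y.
  move=> [u|] [w|] //=; rewrite /rho_weight -/N -/s;
    by apply: divr_ge0; [apply: mulr_ge0; [exact: ltW|] | exact: ltW].
by apply: divr_ge0 => //; apply: sumr_ge0.
Qed.

Lemma hit_ge0 v t : 0 <= hit_at Q None Bset v t.
Proof. by apply: sumr_ge0 => x _; apply: prodr_ge0 => j _; apply: Q_ge0. Qed.

Lemma p_gt0 : 0 < p.
Proof. by apply: divr_gt0 => //; apply: lt_trans sN. Qed.
Lemma p_le1 : p <= 1.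
Proof. by rewrite /p ler_pdivrMr ?mul1r ?(ltW sN) //; apply: lt_trans sN. Qed.

Lemma hh_le_hit T u : hh E A p T u <= hit_before Q None Bset (Some u).
Proof.
have dgt : forall u, 0 < dd E u by move=> w; rewrite /dd sumE ltr0n.
have Eg : forall u w, 0 <= E u w by move=> *; rewrite /E ler0n.
have Es : forall u w, E u w = E w u by move=> *; rewrite /E e_sym.
set f := hit_at Q None Bset (Some u).
have ser : forall m, series f m.+1 = hh E A p m u.
  by move=> m; rewrite -link /series /= big_mkord.
have homo : {homo series f : n m / (n <= m)%N >-> n <= m}.
  move=> a b ab; rewrite /series /=.
  by apply: (nondecreasing_series (P := xpredT)) => // m _ _; apply: hit_ge0.
rewrite -ser /hit_before; apply: nondecreasing_cvgn_le => //.
apply: nondecreasing_is_cvgn => //.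
exists 1 => y [[|m] _ <-].
  by rewrite /series /= big_geq // ler01.
rewrite ser; by case/andP: (hh_bounds A Eg dgt p_gt0 p_le1 m u).
Qed.
End Concrete.
Lemma n32 (x : R) : 0 <= x -> x `^ (3 / 2) = x * Num.sqrt x.
Proof.
move=> x0.
have -> : (3 / 2 : R) = 1 + 2^-1 by field.
rewrite powRD; last by apply/implyP => H; exfalso; move: H; apply/negP; rewrite gt_eqF //.
by rewrite powRr1 // powR12_sqrt.
Qed.

Lemma geom_small (p : R) (T : nat) : 0 < p -> p <= 1 -> (1 - p) ^+ T * (1 + T%:R * p) <= 1.
Proof.
move=> p0 p1; elim: T => [|T IH]; first by rewrite expr0 mul0r addr0 mulr1.
have q0 : 0 <= (1 - p) ^+ T by apply: exprn_ge0; rewrite subr_ge0.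
rewrite exprS -natr1.
have Tp : 0 <= T%:R * p :> R by apply: mulr_ge0; [apply: ler0n | apply: ltW].
have T0 : 0 <= T%:R :> R by apply: ler0n.
set a := (1 - p) ^+ T in q0 IH *.
set t := T%:R in Tp T0 IH *.
have -> : (1 - p) * a * (1 + (t + 1) * p) = a * (1 + t * p) - a * (t * p * p + p * p) by ring.
have : 0 <= a * (t * p * p + p * p).
  apply: mulr_ge0 => //; apply: addr_ge0; apply: mulr_ge0 => //; exact: ltW.
lra.
Qed.

Lemma eps_le1 (delta eps theta : R) : 0 < delta -> 0 < eps ->
  eps `^ (11 * 2 `^ (2 / delta)) <= theta -> theta <= eps -> eps <= 1.
Proof.
move=> d0 e0 lo hi; rewrite leNgt; apply/negP => e1.
have X1 : 1 <= 2 `^ (2 / delta) :> R.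
  have H : (2:R) `^ 0 <= 2 `^ (2 / delta).
    apply: ler_powR; first by rewrite ler1n.
    by apply: divr_ge0; [rewrite ler0n | exact: ltW].
  by rewrite powRr0 in H.
have X2 : 2%:R <= 11 * 2 `^ (2 / delta) :> R by lra.
have := ler_powR (ltW e1) X2; rewrite powR_mulrn; last exact: ltW.
move=> H; have := le_trans H (le_trans lo hi); nra.
Qed.

Lemma exists_T (p x : R) : 0 < p -> p <= 1 -> 0 < x -> exists T : nat, (1 - p) ^+ T <= x.
Proof.
move=> p0 p1 x0.
have y0 : 0 <= 1 / (p * x) by apply: divr_ge0; [exact: ler01 | apply: ltW; apply: mulr_gt0].
exists (Num.Def.archi_bound (1 / (p * x))).
have H1 := archi_boundP y0.
set T := Num.Def.archi_bound _ in H1 *.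
have H2 := geom_small T p0 p1.
have q0 : 0 <= (1 - p) ^+ T by apply: exprn_ge0; rewrite subr_ge0.
have H3 : 1 < T%:R * p * x.
  have : 1 / (p * x) * (p * x) < T%:R * (p * x).
    by rewrite ltr_pM2r // mulr_gt0.
  rewrite mulrA divfK ?gt_eqF ?mulr_gt0 //.
set t := T%:R in H1 H2 H3 *.
set a := (1 - p) ^+ T in q0 H2 *.
have tp0 : 0 <= t * p by apply: mulr_ge0; [exact: ler0n | exact: ltW].
nra.
Qed.

Lemma cutR_eq (V : finType) (e : rel V) (A : {set V}) :
  cutR (fun u w => ((e u w)%:R : R)) A = (cut_size e A)%:R.
Proof.
rewrite /cut_size -sumr_const big_mkcond /=.
set S := [set _ | _].
rewrite (eq_bigr (fun p => (fun u w => if (u, w) \in S then (1:R) else 0) p.1 p.2)); last by case.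
rewrite -(pair_bigA _ (fun u w => if (u, w) \in S then (1:R) else 0)) /=.
rewrite /cutR big_mkcond /=; apply: eq_bigr => u _.
case Hu: (u \in A).
  rewrite big_mkcond; apply: eq_bigr => w _; rewrite inE /= Hu /=.
  by case: (w \in A); case: (e u w).
by rewrite big1 // => w _; rewrite inE /= Hu.
Qed.

Theorem claim3p6 :
  forall delta : R, 0 < delta -> delta <= 1 ->
  exists C : R,
  forall (eps : R), 0 < eps ->
  forall (V : finType) (e : rel V) (k : nat) (part : V -> 'I_k) (theta : R),
    simple_graph e -> connected_graph e ->
    (forall v : V, delta * #|V|%:R <= (deg e v)%:R) ->
    good_decomposition e part eps delta (#|V|%:R `^ (3 / 2)) theta ->
    1 / (theta * eps ^+ 8) < Num.sqrt (#|V|%:R) ->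
    forall i : 'I_k,
    exists Vi' : {set V},
      [/\ Vi' \subset [set v | part v == i],
          delta ^+ 4 * #|V|%:R / 80 <= (#|Vi'|)%:R &
          forall v : V, v \in Vi' ->
            1 - C * eps ^+ 2 <=
            hit_before (Grho_trans e theta eps) None
              [set x : option V | if x is Some u then part u != i else false]
              (Some v)].
Proof.
move=> delta d0 d1.
exists (4 / delta ^+ 2).
move=> eps e0 V e k part theta [esym eirr] conn degH [[thlo thhi] kb Hi] sqH i.
case: (Hi i) => Asz _ degA cutH.
have th0 : 0 < theta := lt_le_trans (powR_gt0 _ e0) thlo.
have e1 : eps <= 1 := eps_le1 d0 e0 thlo thhi.
have th1 : theta <= 1 := le_trans thhi e1.
have t8 : 0 < theta * eps ^+ 8 by rewrite mulr_gt0 // exprn_gt0.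
have t8' : theta * eps ^+ 8 <= 1.
  by apply: mulr_ile1 => //; [exact: ltW | apply: exprn_ge0; exact: ltW | apply: exprn_ile1 => //; exact: ltW].
have s1 : 1 < Num.sqrt (#|V|%:R : R).
  apply: le_lt_trans sqH; by rewrite ler_pdivlMr // mul1r.
have N0 : 0 < theta * eps ^+ 4 by rewrite mulr_gt0 // exprn_gt0.
have N1 : theta * eps ^+ 4 <= 1.
  by apply: mulr_ile1 => //; [exact: ltW | apply: exprn_ge0; exact: ltW | apply: exprn_ile1 => //; exact: ltW].
have sN : theta * eps ^+ 4 < Num.sqrt (#|V|%:R : R) by apply: le_lt_trans s1.
have nn0 : 0 < (#|V|%:R : R).
  rewrite ltNge; apply/negP => H.
  have : #|V|%:R = 0 :> R by apply/eqP; rewrite eq_le H ler0n.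
  by move=> H0; move: s1; rewrite H0 sqrtr0 ltr10.
have deg_gt0 : forall u, (0 < deg e u)%N.
  move=> u; rewrite -(ltr0n R); apply: lt_le_trans (degH u); exact: mulr_gt0.
have p0 := p_gt0 sN N0.
have p1 := p_le1 sN N0.
set E := fun u w : V => ((e u w)%:R : R).
set A := [set v | part v == i] in Asz degA cutH *.
have Eg : forall u w, 0 <= E u w by move=> *; rewrite /E ler0n.
have Es : forall u w, E u w = E w u by move=> *; rewrite /E esym.
have dgt : forall u, 0 < dd E u by move=> u; rewrite /dd sumE ltr0n.
have e6 : 0 < eps ^+ 6 by rewrite exprn_gt0.
have [T HT] := exists_T p0 p1 e6.
have FB := FF_bound A Eg Es dgt p0 p1 T.
set nn := (#|V|%:R : R) in nn0 s1 sN sqH degH Asz cutH FB p0 p1 HT *.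
set s := Num.sqrt nn in s1 sN sqH FB p0 p1 HT *.
set N := theta * eps ^+ 4 in N0 N1 sN p0 p1 FB HT *.
set p := N / s in p0 p1 FB HT *.
have FF0 : 0 <= FF E A p 0 <= nn * nn.
  rewrite /FF /=; apply/andP; split.
    by apply: sumr_ge0 => u _; rewrite subr0 mulr1; exact: ltW.
  apply: (@le_trans _ _ (\sum_(u in A) nn)).
    apply: ler_sum => u _; rewrite subr0 mulr1 /dd sumE /nn ler_nat.
    exact: max_card.
  rewrite sumr_const -mulr_natr ler_wpM2l ?ler_nat ?max_card //; exact: ltW.
have cut0 : 0 <= cutR E A by rewrite cutR_eq ler0n.
have cutB : cutR E A <= eps ^+ 9 * theta ^+ 2 * (nn * s).
  by rewrite cutR_eq -n32 //; exact: ltW.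
have ss : s * s = nn by rewrite -expr2 sqr_sqrtr //; exact: ltW.
have s0 : 0 < s by apply: lt_trans s1.
have cutP : cutR E A * (1 - p) / p <= eps ^+ 6 * (nn * nn).
  have -> : cutR E A * (1 - p) / p = (cutR E A * s / N) * (1 - p).
    by rewrite /p; field; rewrite ?gt_eqF.
  apply: (@le_trans _ _ (cutR E A * s / N)).
    rewrite ler_piMr //; last by rewrite gerBl ltW.
    by rewrite divr_ge0 ?mulr_ge0 //; apply: ltW.
  apply: (@le_trans _ _ (eps ^+ 9 * theta ^+ 2 * (nn * s) * s / N)).
    by rewrite ler_pM2r ?invr_gt0 // ler_pM2r.
  have -> : eps ^+ 9 * theta ^+ 2 * (nn * s) * s / N = eps ^+ 5 * theta * (nn * nn).
    by rewrite -ss /N; field; rewrite ?gt_eqF.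
  have -> : eps ^+ 6 * (nn * nn) = eps ^+ 5 * eps * (nn * nn) by rewrite exprSr.
  by rewrite ler_pM2r ?mulr_gt0 // ler_pM2l ?exprn_gt0.
have FT : FF E A p T <= 2 * eps ^+ 6 * (nn * nn).
  apply: (le_trans FB).
  have : (1 - p) ^+ T * FF E A p 0 <= eps ^+ 6 * (nn * nn).
    case/andP: FF0 => F0 F1; apply: ler_pM => //.
    by apply: exprn_ge0; rewrite subr_ge0.
  move=> H; have := lerD H cutP; lra.
set h := hh E A p T.
have hB : forall u, 0 <= h u <= 1 by move=> u; exact: hh_bounds.
set Bad := [set u in A | h u < 1 - 4 / delta ^+ 2 * eps ^+ 2].
exists (A :\: Bad); split.
- exact: subsetDl.
- have cID := cardsID Bad A.
  set b := #|A :&: Bad| in cID *.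
  have hb : (b%:R : R) <= delta * nn / 32.
    case: (lerP 1 (4 / delta ^+ 2 * eps ^+ 2)) => HC.
      have -> : b = 0%N.
        rewrite /b; apply/eqP; rewrite cards_eq0; apply/eqP/setP => u.
        rewrite !inE; apply/negP => /andP[_ /andP[_ Hu]].
        case/andP: (hB u) => H0 _; lra.
      by rewrite mulr_ge0 // ?divr_ge0 // ?mulr_ge0 //; apply: ltW.
    set x := eps ^+ 2 in HC *.
    have x0 : 0 < x by rewrite exprn_gt0.
    have HC' : 4 * x < delta ^+ 2.
      by move: HC; rewrite mulrAC ltr_pdivrMr ?exprn_gt0 // mul1r.
    have dl2 : delta ^+ 2 <= 1 by apply: exprn_ile1 => //; exact: ltW.
    have e6x : eps ^+ 6 = x ^+ 3 by rewrite /x -exprM.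
    have rest : 0 <= \sum_(u in A :\: Bad) dd E u * (1 - h u).
      apply: sumr_ge0 => u _; apply: mulr_ge0; first exact: ltW.
      by case/andP: (hB u) => _ H; rewrite subr_ge0.
    have lowB : (b%:R : R) * (delta * nn * (4 / delta ^+ 2 * x))
                <= \sum_(u in A :&: Bad) dd E u * (1 - h u).
      rewrite [X in X <= _](_ : _ = \sum_(u in A :&: Bad) (delta * nn * (4 / delta ^+ 2 * x))); last first.
        by rewrite sumr_const mulr_natl.
      apply: ler_sum => u; rewrite !inE => /andP[ua /andP[_ ub]].
      apply: ler_pM.
      - by apply: mulr_ge0; apply: ltW.
      - by apply: mulr_ge0; [apply: divr_ge0; [rewrite ler0n | apply: exprn_ge0; exact: ltW] | exact: ltW].
      - by rewrite /dd sumE; exact: degH.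
      - rewrite -/x in ub; lra.
    have Hsplit : FF E A p T = \sum_(u in A :&: Bad) dd E u * (1 - h u)
                             + \sum_(u in A :\: Bad) dd E u * (1 - h u).
      by rewrite /FF (big_setID Bad).
    have K1 : (b%:R : R) * (delta * nn * (4 / delta ^+ 2 * x)) <= 2 * x ^+ 3 * (nn * nn).
      rewrite -e6x; lra.
    have K2 : (b%:R : R) * (delta * nn * (4 / delta ^+ 2 * x)) = b%:R * 4 * x * nn / delta.
      by field; rewrite gt_eqF.
    rewrite K2 ler_pdivrMr // in K1.
    have b0 : 0 <= (b%:R : R) by apply: ler0n.
    have K3 : (b%:R : R) * (4 * x * nn) <= (x ^+ 2 * nn * delta / 2) * (4 * x * nn).
      have -> : (x ^+ 2 * nn * delta / 2) * (4 * x * nn) = 2 * x ^+ 3 * (nn * nn) * delta.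
        by rewrite !exprS expr0; field.
      by move: K1; rewrite !mulrA.
    rewrite ler_pM2r in K3; last by rewrite !mulr_gt0.
    apply: (le_trans K3).
    have x14 : x ^+ 2 <= 1 / 16.
      rewrite expr2; have : x < 1 / 4 by lra.
      move=> H; nra.
    have : 0 < nn * delta by rewrite mulr_gt0.
    move=> H; rewrite (mulrC delta) -mulrA; nra.
  have d4 : delta ^+ 4 * nn <= delta * nn.
    rewrite ler_pM2r // -[X in _ <= X]mulr1 exprS ler_wpM2l //; first exact: ltW.
    by apply: exprn_ile1 => //; exact: ltW.
  move: Asz; rewrite -cID natrD => Asz.
  have : 0 <= delta * nn by apply: mulr_ge0; [exact: ltW | exact: ltW].
  lra.
- move=> v; rewrite !inE => /andP[nb vA].
  apply: (le_trans _ (hh_le_hit part i (ltW N0) sN deg_gt0 esym N0 T v)).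
  by move: nb; rewrite vA /= -leNgt.
Qed.
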